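(* Let $k\ge 2$ and $s\ge 1$ be integers, and let $r_1,\ldots,r_s$ be integers with $0\le r_i\le k$ and $r_i\ne 1$ for each $i\in\{1,\ldots,s\}$. Let $D$ be a strongly connected digraph such that every (directed) cycle of $D$ has length congruent to $r$ modulo $k$ for some $r\in\{r_1,\ldots,r_s\}$. Then $\chi_A(D)\le 2s+1$.
   Context: Digraphs are finite and loopless; paths and cycles are directed. A set of vertices of a digraph $D$ is acyclic if the subdigraph it induces contains no directed cycle. The dichromatic number $\chi_A(D)$ is the minimum $k$ such that $V(D)$ can be colored with $k$ colors so that every color class is acyclic. A digraph is strongly connected if for every ordered pair of distinct vertices $u,v$ there is a directed $uv$-path. *)

(* Defs.v *)
From mathcomp Require Import all_boot.
Set Implicit Arguments. Unset Strict Implicit. Unset Printing Implicit Defensive.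

Definition loopless (V : finType) (e : rel V) : Prop := forall v, ~~ e v v.

Definition dcycle (V : finType) (e : rel V) (c : seq V) : Prop :=
  [/\ c != [::], uniq c & cycle e c].

Definition acyclic_set (V : finType) (e : rel V) (A : {pred V}) : Prop :=
  forall c : seq V, dcycle e c -> ~ all (mem A) c.

Definition strongly_connected (V : finType) (e : rel V) : Prop :=
  forall u v : V, connect e u v.

Definition dichromatic_le (V : finType) (e : rel V) (m : nat) : Prop :=
  exists f : V -> 'I_m, forall i : 'I_m, acyclic_set e [pred v | f v == i].

(* Main.v *)
Require Import Defs.
From mathcomp Require Import all_boot.
Set Implicit Arguments. Unset Strict Implicit. Unset Printing Implicit Defensive.
From mathcomp Require Import zify.

Section Greedy.
Variables (T : finType) (adj : rel T) (m : nat).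
Hypothesis adj_irr : forall a, ~~ adj a a.
Hypothesis deg : forall a, #|[set b | adj a b || adj b a]| < m.
Hypothesis m0 : 0 < m.

Lemma greedy_set n : forall A : {set T}, #|A| <= n ->
  exists g : T -> 'I_m, forall a b, a \in A -> b \in A -> adj a b -> g a != g b.
Proof.
elim: n => [|n IH] A hA.
  have A0 : A = set0 by apply/eqP; rewrite -cards_eq0; case: #|A| hA.
  by exists (fun _ => Ordinal m0) => a b; rewrite A0 inE.
have [A0|[a0 a0A]] := set_0Vmem A.
  by exists (fun _ => Ordinal m0) => a b; rewrite A0 inE.
have hA' : #|A :\ a0| <= n by move: hA; rewrite (cardsD1 a0) a0A.
have [g' Hg'] := IH _ hA'.
set Used := [set g' b | b in [set b | adj a0 b || adj b a0]].
have [c cU | allU] := pickP (fun c => c \notin Used); last first.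
  have : #|[set: 'I_m]| <= #|Used|.
    by apply: subset_leq_card; apply/subsetP => c _; have := allU c; move/negbFE.
  rewrite cardsT card_ord => h; have := leq_trans h (leq_imset_card _ _).
  by rewrite leqNgt deg.
exists (fun y => if y == a0 then c else g' y) => a b aA bA ab.
case: (eqVneq a a0) => [ea | na]; case: (eqVneq b a0) => [eb | nb].
- by subst; have := adj_irr a0; rewrite ab.
- subst a; apply/eqP => hc; move: cU; rewrite hc; move/negP; apply.
  by apply/imsetP; exists b => //; rewrite inE ab.
- subst b; apply/eqP => hc; move: cU; rewrite -hc; move/negP; apply.
  by apply/imsetP; exists a => //; rewrite inE ab orbT.
- by apply: Hg' => //; rewrite !inE ?na ?nb.
Qed.

Lemma greedy : exists g : T -> 'I_m, forall a b, adj a b -> g a != g b.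
Proof.
have [g Hg] := greedy_set (leqnn #|[set: T]|).
by exists g => a b; apply: Hg; rewrite inE.
Qed.
End Greedy.

Section DFS.
Variables (V : finType) (e : rel V).

Definition eS (S : {set V}) : rel V := [rel a b | [&& a \in S, b \in S & e a b]].

Definition upath (S : {set V}) (a b : V) (L : nat) :=
  exists s, [/\ path e a s, last a s = b, uniq (a :: s),
                all (fun w => w \in S) (a :: s) & size s = L].

Lemma upath_mono (S S' : {set V}) a b L : S \subset S' -> upath S a b L -> upath S' a b L.
Proof.
move=> sub [s [h1 h2 h3 h4 h5]]; exists s; split=> //.
by apply/allP => w /(allP h4) /(subsetP sub).
Qed.

Lemma upath0 (S : {set V}) a : a \in S -> upath S a a 0.
Proof. by move=> aS; exists [::]; rewrite /= aS. Qed.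

Lemma pathS (S : {set V}) x s : path (eS S) x s -> all (fun w => w \in S) s.
Proof. by elim: s x => //= y s IH x /andP[/and3P[_ -> _] /IH]. Qed.

Definition Claim (S : {set V}) (Q : pred V) :=
  exists p f : V -> nat,
   (forall u v, u \in S -> v \in S -> e u v ->
      f v < f u \/ exists L, upath S v u L /\ p u = p v + L) /\
   (forall u, u \in S -> (exists r, [/\ r \in S, Q r & connect (eS S) r u]) ->
      exists r, [/\ r \in S, Q r, p r = 0 & upath S r u (p u)]).

Lemma path_avoid (S R : {set V}) :
  (forall a b, a \in R -> eS S a b -> b \in R) ->
  forall s r, r \in S -> path (eS S) r s -> last r s \notin R ->
    all (fun w => w \in S :\: R) (r :: s).
Proof.
move=> cl; elim=> [|y s IH] r rS /=.
  by move=> _ h; rewrite !inE h rS.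
move=> /andP[ery ps] hl.
have yS : y \in S by case/and3P: ery.
have := IH y yS ps hl => /= /andP[yin ->]; rewrite andbT yin andbT.
rewrite inE rS andbT; apply/negP => rR; move: yin; rewrite inE (cl r y rR ery) //.
Qed.

Lemma claimP n : forall (S : {set V}) (Q : pred V), #|S| <= n -> Claim S Q.
Proof.
elim: n => [|n IH] S Q hS.
  have S0 : S = set0 by apply/eqP; rewrite -cards_eq0; case: #|S| hS.
  by exists (fun _ => 0), (fun _ => 0); split=> u; rewrite S0 inE.
have [S0|[x0 x0S]] := set_0Vmem S.
  by exists (fun _ => 0), (fun _ => 0); split=> u; rewrite S0 inE.
have [x [xS xQ]] : exists x, x \in S /\ (Q x \/ forall y, y \in S -> ~~ Q y).
  case: (pickP (fun y => (y \in S) && Q y)) => [y /andP[yS yQ] | none].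
    by exists y; split=> //; left.
  exists x0; split=> //; right=> y yS; have := none y; rewrite yS /= => ->.
  done.
pose R := [set y in S | connect (eS S) x y].
have xR : x \in R by rewrite inE xS connect0.
have RS : R \subset S by apply/subsetP => y; rewrite inE => /andP[].
have cl : forall a b, a \in R -> eS S a b -> b \in R.
  move=> a b; rewrite !inE => /andP[_ ca] eab.
  have bS : b \in S by case/and3P: eab.
  by rewrite bS /=; apply: connect_trans ca (connect1 eab).
pose S1 := S :\: R.
pose R' := R :\ x.
have S1S : S1 \subset S by apply: subsetDl.
have R'S : R' \subset S by apply: subset_trans (subsetDl _ _) RS.
have hSx : #|S :\ x| <= n by move: hS; rewrite (cardsD1 x) xS.
have hS1 : #|S1| <= n.
  apply: leq_trans hSx; apply: subset_leq_card; apply/subsetP => y.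
  rewrite !inE => /andP[yR yS]; rewrite yS andbT.
  by apply/eqP => yx; move: yR; rewrite yx xS connect0.
have hR' : #|R'| <= n.
  apply: leq_trans hSx; apply: subset_leq_card; apply/subsetP => y.
  by rewrite !inE => /andP[-> /andP[-> _]].
have [p1 [f1 [B1 R1]]] := IH S1 Q hS1.
have [p2 [f2 [B2 R2]]] := IH R' (e x) hR'.
pose N := (\max_(w : V) f2 w).+1.
have f2N w : f2 w < N by rewrite ltnS leq_bigmax.
pose p y := if y \in S1 then p1 y else if y == x then 0 else (p2 y).+1.
pose f y := if y \in S1 then f1 y + N.+1 else if y == x then N else f2 y.
have fromx : forall u, u \in R' -> upath S x u (p2 u).+1.
  move=> u uR'.
  have uR : u \in R by move: uR'; rewrite in_setD1 => /andP[].
  have ux : u != x by move: uR'; rewrite in_setD1 => /andP[].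
  have [c [cR' exc ccu]] : exists c, [/\ c \in R', e x c & connect (eS R') c u].
    move: uR; rewrite in_set => /andP[_ /connectP[s ps us]].
    move: us; case: (shortenP ps) => s' ps' us' _ us.
    case: s' ps' us' us => [|c s''] /=; first by move=> _ _ us; move: ux; rewrite us eqxx.
    move=> /andP[exc ps''] /andP[xn us''] us.
    have allR : forall w, w \in c :: s'' -> w \in R'.
      move=> w win; rewrite !inE.
      have wx : w != x by apply: contraNneq xn => <-.
      rewrite wx /=.
      have := path_connect (e := eS S) (x := x) (p := c :: s''); rewrite /= exc ps''.
      move=> /(_ isT w); rewrite inE win orbT => /(_ isT) cw.
      have wS : w \in S.
        have hp : path (eS S) x (c :: s'') by rewrite /= exc ps''.
        exact: (allP (pathS hp) w win).
      by rewrite wS.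
    exists c; split; first exact: allR (mem_head _ _).
      by case/and3P: exc.
    apply/connectP; exists s'' => //.
    apply: (sub_in_path (P := mem R') (e := eS S)); last exact: ps''.
      by move=> a b aR bR /and3P[_ _ eab]; apply/and3P; split.
    by apply/allP => w; apply: allR.
  have [r [rR' exr pr0 [sr [h1 h2 h3 h4 h5]]]] := R2 u uR' (ex_intro _ c (And3 cR' exc ccu)).
  exists (r :: sr); split => //=; first by rewrite exr h1.
  - move: h3 => /= ->; rewrite andbT; apply/negP => xin.
    by have := allP h4 x xin; rewrite in_setD1 eqxx.
  - have := sub_all (fun w (hw : w \in R') => subsetP R'S w hw) h4; by rewrite /= xS => ->.
  - by rewrite h5.
have inR : forall u, u \in S -> u \notin S1 -> u \in R.
  by move=> u uS; rewrite in_setD uS andbT negbK.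
have inR' : forall u, u \in R -> u != x -> u \in R'.
  by move=> u uR ux; rewrite /R' in_setD1 ux uR.
exists p, f; split.
- move=> u v uS vS euv.
  have eSuv : eS S u v by apply/and3P.
  case: (boolP (u \in S1)) => uS1; case: (boolP (v \in S1)) => vS1.
  + have := B1 u v uS1 vS1 euv; rewrite /f /p uS1 vS1 => -[h|[L [hp hpe]]].
      by left; rewrite ltn_add2r.
    by right; exists L; split=> //; exact: upath_mono S1S hp.
  + left; have hN : N < f1 u + N.+1 by rewrite addnS ltnS leq_addl.
    rewrite /f uS1 (negbTE vS1); case: (v == x) => //.
    exact: ltn_trans (f2N v) hN.
  + have uR := inR u uS uS1; have vR := cl u v uR eSuv.
    by move: vS1; rewrite in_setD vR.
  + have uR := inR u uS uS1; have vR := inR v vS vS1.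
    rewrite /f /p (negbTE uS1) (negbTE vS1).
    case: (eqVneq u x) => [ux|ux]; case: (eqVneq v x) => [vx|vx].
    * by right; exists 0; subst; split; [exact: upath0 | rewrite addn0].
    * by left.
    * right; exists (p2 u).+1; split; first by rewrite vx; exact: fromx (inR' u uR ux).
      done.
    * have [h|[L [hp hpe]]] := B2 u v (inR' u uR ux) (inR' v vR vx) euv; first by left.
      by right; exists L; split; [exact: upath_mono R'S hp | rewrite hpe].
- move=> u uS [r [rS rQ cru]].
  case: (boolP (u \in S1)) => uS1.
  + have [r' [r'S1 r'Q pr' hp]] : exists r', [/\ r' \in S1, Q r', p1 r' = 0 & upath S1 r' u (p1 u)].
      apply: R1 => //; exists r.
      move: cru => /connectP[sq pq uq].
      have uNR : last r sq \notin R by rewrite -uq; move: uS1; rewrite /S1 in_setD => /andP[].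
      have hall := path_avoid cl rS pq uNR.
      split.
      * by move: hall => /= /andP[].
      * done.
      * apply/connectP; exists sq => //.
        apply: (sub_in_path (P := mem S1) (e := eS S)); last exact: pq.
          by move=> a b aR bR /and3P[_ _ eab]; apply/and3P; split.
        exact: hall.
    exists r'; split => //; first exact: (subsetP S1S).
      by rewrite /p r'S1.
    by rewrite /p uS1; exact: upath_mono S1S hp.
  + have uR := inR u uS uS1.
    have Qx : Q x by case: xQ => // h; have := h r rS; rewrite rQ.
    have xS1 : x \notin S1 by rewrite /S1 in_setD xR.
    exists x; split => //; first by rewrite /p (negbTE xS1) eqxx.
    rewrite /p (negbTE uS1); case: (eqVneq u x) => [->|ux]; first exact: upath0.
    exact: fromx (inR' u uR ux).
Qed.
End DFS.

Lemma path_find (T : eqType) (e r : rel T) x s : path e x s -> ~~ path r x s ->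
  exists u v, [/\ u \in x :: s, v \in x :: s, e u v & ~~ r u v].
Proof.
elim: s x => [|y s IH] x //= /andP[exy ps].
case: (boolP (r x y)) => rxy /=.
  move=> /(IH _ ps) [u [v [hu hv euv ruv]]].
  by exists u, v; split=> //; rewrite inE ?hu ?hv orbT.
by move=> _; exists x, y; rewrite !inE !eqxx orbT.
Qed.

Lemma mod_shift k t b : 0 < k -> b < k -> t < k ->
  b = ((b + t) %% k + (k - t)) %% k.
Proof.
move=> k0 bk tk.
rewrite modnDml -addnA subnKC ?(ltnW tk) // modnDr modn_small //.
Qed.

Theorem theorem1 (k s : nat) (r : 'I_s -> nat)
  (V : finType) (e : rel V) :
  2 <= k -> 1 <= s ->
  (forall i : 'I_s, r i <= k /\ r i <> 1) ->
  loopless e ->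
  strongly_connected e ->
  (forall c : seq V, dcycle e c -> exists i : 'I_s, size c = r i %[mod k]) ->
  dichromatic_le e (2 * s + 1).
Proof.
move=> k2 s1 hr _ _ hcyc.
have k0 : 0 < k by apply: leq_trans k2.
have [p [f [B _]]] := @claimP V e _ [set: V] xpred0 (leqnn _).
pose t i := (k - r i).+1.
pose hstep (i : 'I_s) (a : 'I_k) : 'I_k := Ordinal (ltn_pmod (a + t i) k0).
pose adj : rel 'I_k := fun a b => [exists i, b == hstep i a].
have tk : forall i, t i %% k != 0.
  move=> i; have [ri rn1] := hr i.
  have [r0|rpos] := posnP (r i).
    rewrite /t r0 subn0 -addn1 modnDl modn_small //.
  have tlt : t i < k.
    rewrite /t; case: (r i) rpos rn1 ri => [|[|ri']] //= _ _ h; lia.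
  by rewrite modn_small //; rewrite /t.
have adj_irr : forall a, ~~ adj a a.
  move=> a; apply/existsP => -[i /eqP /(congr1 val) /= h].
  have : (a + 0) %% k == (a + t i) %% k by rewrite addn0 modn_small ?ltn_ord // -h.
  by rewrite eqn_modDl mod0n eq_sym (negbTE (tk i)).
have deg : forall a, #|[set b | adj a b || adj b a]| < 2 * s + 1.
  move=> a.
  pose hinv (i : 'I_s) : 'I_k := Ordinal (ltn_pmod (a + (k - t i %% k)) k0).
  pose F (ib : 'I_s * bool) := if ib.2 then hinv ib.1 else hstep ib.1 a.
  apply: (@leq_ltn_trans #|[set F ib | ib in [set: 'I_s * bool]]|).
    apply: subset_leq_card; apply/subsetP => b; rewrite inE => /orP[] /existsP[i /eqP hb].
      by apply/imsetP; exists (i, false) => //; rewrite inE.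
    apply/imsetP; exists (i, true); rewrite ?inE //= /hinv; apply: val_inj => /=.
    rewrite hb /=.
    by rewrite -(modnDmr b (t i)); apply: mod_shift k0 (ltn_ord b) (ltn_pmod _ k0).
  apply: (leq_ltn_trans (leq_imset_card F _)).
  by rewrite cardsT card_prod card_bool card_ord mulnC addn1.
have m0 : 0 < 2 * s + 1 by rewrite addn1.
have [g Hg] := greedy adj_irr deg m0.
pose col (v : V) := g (Ordinal (ltn_pmod (p v) k0)).
exists col => i c [cn uc cyc] allc.
case: c cn uc cyc allc => [|x c'] // _ uc cyc allc.
pose lt := [rel u v : V | f v < f u].
have nlt : ~~ path lt x (rcons c' x).
  apply/negP => hp.
  have trans : transitive lt by move=> a b d /= h1 h2; apply: ltn_trans h2 h1.
  have := order_path_min trans hp => /allP /(_ x).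
  by rewrite mem_rcons mem_head /= ltnn => /(_ isT).
have [u [v [hu hv euv nuv]]] := path_find cyc nlt.
have hu' : u \in x :: c' by move: hu; rewrite !inE mem_rcons !inE; case/orP=> ->; rewrite ?orbT.
have hv' : v \in x :: c' by move: hv; rewrite !inE mem_rcons !inE; case/orP=> ->; rewrite ?orbT.
have cu : col u = i by have /allP := allc; move=> /(_ u hu') /=; rewrite inE => /eqP.
have cv : col v = i by have /allP := allc; move=> /(_ v hv') /=; rewrite inE => /eqP.
have [/= h|[L [[sq [h1 h2 h3 h4 h5]] hpe]]] := B u v (in_setT u) (in_setT v) euv.
  by move: nuv; rewrite /= h.
have [j hj] : exists j, size (v :: sq) = r j %[mod k].
  apply: hcyc; split => //.
  by rewrite /cycle rcons_path h1 h2 euv.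
have : adj (Ordinal (ltn_pmod (p u) k0)) (Ordinal (ltn_pmod (p v) k0)).
  apply/existsP; exists j; apply/eqP; apply: val_inj => /=.
  have e2 : (L.+1 + (k - r j)) %% k = 0.
    rewrite -modnDml -h5 -[(size sq).+1]/(size (v :: sq)) hj modnDml subnKC ?modnn //.
    exact: (hr j).1.
  have e1 : p v + L + (k - r j).+1 = p v + (L.+1 + (k - r j)) by rewrite -addnA addnS addSn.
  by rewrite modnDml hpe /t e1 -modnDmr e2 addn0.
move/Hg; rewrite -/(col u) -/(col v) cu cv eqxx //.
Qed.
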